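(* Let $K\ge 2$ and $\Theta=\{(\theta_1,\ldots,\theta_K):\sum_k\theta_k=1,\ \theta_k\ge0\}$. Consider Dempster's Simplex-DSM posterior for a multinomial sample of size $n=1$ with observation $X=1$: its random focal elements are $$\mathbf e(Z)=\Big\{\theta\in\Theta:\ \frac{Z_1}{\theta_1}\le\frac{Z_j}{\theta_j},\ j=2,\ldots,K\Big\},\qquad Z_1,\ldots,Z_K\stackrel{iid}{\sim}\mathrm{Expo}(1)$$ (with the convention $z/0=+\infty$ for $z>0$). Fix a value $t=(t_2,\ldots,t_K)$ of $\theta_{-1}\equiv(\theta_2,\ldots,\theta_K)/(1-\theta_1)$ in the $(K-2)$-simplex. Then the conditional DSM for $\theta_1$ given $\theta_{-1}=t$ (obtained by intersecting each focal element with $\{\theta\in\Theta:\theta_{-1}=t\}$, conditioning on non-empty intersection, and projecting onto the $\theta_1$-coordinate) has random intervals of the form $[U,1)$ with $U\sim\mathrm{Unif}[0,1)$.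
   Context: A Dempster–Shafer model (DSM) here is a random set (focal element) in the parameter space; conditioning a DSM on an event means intersecting the random set with that event and restricting to (i.e. conditioning the underlying randomness on) non-empty intersections; the ''Simplex-DSM'' is the model defined by the displayed random sets. *)

(* Defs.v *)
From HB Require Import structures.
From mathcomp Require Import all_boot all_order all_algebra.
From mathcomp Require Import all_classical all_reals all_analysis.
Set Implicit Arguments. Unset Strict Implicit. Unset Printing Implicit Defensive.
Import Order.TTheory GRing.Theory Num.Theory.
Local Open Scope classical_set_scope.
Local Open Scope ring_scope.

(* The simplex Theta in R^K, K = k.+2, coordinates indexed by 'I_K;
   theta_1 is the coordinate ord0. *)
Definition simplex (n : nat) (R : realType) : set ('I_n -> R) :=
  [set th | (forall i, 0 <= th i) /\ \sum_(i < n) th i = 1].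

Definition ediv (R : realType) (z th : R) : \bar R :=
  if th == 0 then +oo%E else (z / th)%:E.

Definition focal (k : nat) (R : realType) (z : 'I_k.+2 -> R) : set ('I_k.+2 -> R) :=
  [set th | simplex th /\
     forall j : 'I_k.+2, j != ord0 -> (ediv (z ord0) (th ord0) <= ediv (z j) (th j))%E].

Definition theta_m1 (k : nat) (R : realType) (th : 'I_k.+2 -> R) : 'I_k.+1 -> R :=
  fun j => th (lift ord0 j) / (1 - th ord0).

Definition slice (k : nat) (R : realType) (t : 'I_k.+1 -> R) : set ('I_k.+2 -> R) :=
  [set th | simplex th /\ th ord0 < 1 /\ theta_m1 th = t].

Definition cond_focal (k : nat) (R : realType) (t : 'I_k.+1 -> R)
  (z : 'I_k.+2 -> R) : set R :=
  (fun th : 'I_k.+2 -> R => th ord0) @` (focal z `&` slice t).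

Definition mutually_independent d (T : measurableType d) (R : realType)
  (P : probability T R) (n : nat) (Z : 'I_n -> {RV P >-> R}) : Prop :=
  forall B : 'I_n -> set R, (forall i, measurable (B i)) ->
    P (\bigcap_(i in [set: 'I_n]) (Z i @^-1` B i)) = (\prod_(i < n) P (Z i @^-1` B i))%E.

(* Main.v *)
Require Import Defs.
From HB Require Import structures.
From mathcomp Require Import all_boot all_order all_algebra.
From mathcomp Require Import all_classical all_reals all_analysis.
From mathcomp Require Import ring lra.
From mathcomp Require Import measurable_realfun.
Import Order.TTheory GRing.Theory Num.Theory.
Import numFieldTopology.Exports.
Local Open Scope classical_set_scope.
Local Open Scope ring_scope.

Set Implicit Arguments. Unset Strict Implicit.

Lemma divle (R : realFieldType) (a b c d : R) : 0 < b -> 0 < c ->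
  (a / b <= d / c) = (a * c <= d * b).
Proof. move=> b0 c0. by rewrite ler_pdivrMr // mulrAC ler_pdivlMr. Qed.

Section det.
Variables (k : nat) (R : realType) (t : 'I_k.+1 -> R).
Hypothesis ht : simplex t.

Lemma ht_ge0 j : 0 <= t j.
Proof. by case: ht. Qed.

Lemma ht_pos : exists j, 0 < t j.
Proof.
apply/not_existsP => H; case: ht => _ /eqP; apply/negP.
rewrite big1 ?(oner_neq0 R) 1?eq_sym //= => j _.
apply/eqP; rewrite eq_le ht_ge0 andbT leNgt; exact/negP.
Qed.

Lemma lift_neq0 (j : 'I_k.+1) : lift ord0 j != ord0.
Proof. by rewrite eq_sym neq_lift. Qed.

Definition mkth (s : R) : 'I_k.+2 -> R := fun i =>
  match unlift ord0 i with Some j => t j * (1 - s) | None => s end.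

Lemma mkth0 s : mkth s ord0 = s.
Proof. by rewrite /mkth unlift_none. Qed.

Lemma mkthS s j : mkth s (lift ord0 j) = t j * (1 - s).
Proof. by rewrite /mkth liftK. Qed.

Lemma cond_focalP (z : 'I_k.+2 -> R) s :
  cond_focal t z s <->
  (0 < s < 1 /\ forall j, 0 < t j -> z ord0 * t j * (1 - s) <= z (lift ord0 j) * s).
Proof.
split.
- case=> th [[_ Hf] [[Hs0 _] [Hs1 Htm]]] <-.
  have thS j : th (lift ord0 j) = t j * (1 - th ord0).
    rewrite -Htm /theta_m1 divfK //; by rewrite subr_eq0 eq_sym lt_eqF.
  have th00 : 0 <= th ord0 := Hs0 ord0.
  have sth : 0 < 1 - th ord0 by rewrite subr_gt0.
  have thpos : 0 < th ord0.
    rewrite lt_neqAle th00 andbT; apply/negP => /eqP th0.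
    have [j tj] := ht_pos.
    have := Hf (lift ord0 j) (lift_neq0 j); rewrite /ediv -th0 eqxx thS.
    by rewrite mulf_eq0 (gt_eqF tj) (gt_eqF sth) /= leye_eq.
  split; first by rewrite thpos Hs1.
  move=> j tj; have := Hf (lift ord0 j) (lift_neq0 j).
  rewrite /ediv (gt_eqF thpos) thS mulf_eq0 (gt_eqF tj) (gt_eqF sth) /= lee_fin.
  by rewrite divle ?mulr_gt0 // mulrA.
- case=> /andP[s0 s1] H; exists (mkth s); last by rewrite mkth0.
  have s1' : 0 < 1 - s by rewrite subr_gt0.
  have simp : simplex (mkth s).
    split.
      move=> i; rewrite /mkth; case: unliftP => [j _|_]; last exact: ltW.
      by rewrite mulr_ge0 ?ht_ge0 ?ltW.
    rewrite big_ord_recl mkth0; under eq_bigr do rewrite mkthS.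
    by rewrite -big_distrl /= (proj2 ht) mul1r addrC subrK.
  split; last first.
    split => //; split; first by rewrite mkth0.
    apply/funext => j; rewrite /theta_m1 mkthS mkth0 mulfK //.
    by rewrite gt_eqF.
  split => // i; case: (unliftP ord0 i) => [j ->|->]; last by rewrite eqxx.
  move=> _; rewrite /ediv mkthS mkth0 (gt_eqF s0).
  have [tj0|tjp] := eqVneq (t j) 0.
    by rewrite tj0 mul0r eqxx leey.
  have tj : 0 < t j by rewrite lt_neqAle eq_sym tjp ht_ge0.
  rewrite mulf_eq0 (negbTE tjp) (gt_eqF s1') /= lee_fin.
  by rewrite divle ?mulr_gt0 // mulrA H.
Qed.

Section zz.
Variable z : 'I_k.+2 -> R.
Definition aj j := z (lift ord0 j) + z ord0 * t j.
Definition bj j := z ord0 * t j.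
Definition feas s := 0 < s < 1 /\ forall j, 0 < t j -> bj j <= s * aj j.

Lemma consE s j : (z ord0 * t j * (1 - s) <= z (lift ord0 j) * s) = (bj j <= s * aj j).
Proof.
by rewrite -subr_ge0 -[RHS]subr_ge0 /aj /bj; congr (0 <= _); ring.
Qed.

Lemma cond_focal_feas s : cond_focal t z s <-> feas s.
Proof.
rewrite cond_focalP; split => -[H1 H2]; split => // j tj.
  by rewrite -consE; apply: H2.
by rewrite consE; apply: H2.
Qed.

Definition lo j := if (0 < t j) && (0 < aj j) then bj j / aj j else 0.
Definition up j := if (0 < t j) && (aj j < 0) then bj j / aj j else 1.
Definition Lo := \big[Order.max/0]_j lo j.
Definition Up := \big[Order.min/1]_j up j.
Definition sstar := Order.max Lo (Up / 2).

Lemma sstar_feas : (exists s, feas s) -> feas sstar.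
Proof.
case=> s0 [/andP[s00 s01] Hs].
have Los : Lo <= s0.
  apply/bigmax_leP; split; first exact: ltW.
  move=> j _; rewrite /lo; case: ifPn => [/andP[tj aj0]|_]; last exact: ltW.
  by rewrite ler_pdivrMr // Hs.
have sUp : s0 <= Up.
  apply/bigmin_geP; split; first exact: ltW.
  move=> j _; rewrite /up; case: ifPn => [/andP[tj aj0]|_]; last exact: ltW.
  by rewrite ler_ndivlMr // Hs.
have Up1 : Up <= 1 by rewrite /Up bigmin_idl ge_min lexx.
have Up0 : 0 < Up by apply: lt_le_trans sUp.
have Up2 : Up / 2 < Up by rewrite ltr_pdivrMr // ltr_pMr // ltr1n.
split.
  apply/andP; split; first by rewrite lt_max divr_gt0 // orbT.
  rewrite gt_max (le_lt_trans Los s01) /=.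
  exact: lt_le_trans Up2 Up1.
move=> j tj.
have [aneg|apos|a0] := ltgtP (aj j) 0.
- have : sstar <= up j.
    rewrite ge_max; apply/andP; split.
      apply: (le_trans Los); apply: (le_trans sUp); exact: bigmin_le.
    apply: ltW; apply: (lt_le_trans Up2); exact: bigmin_le.
  by rewrite /up tj aneg /= ler_ndivlMr.
- have : lo j <= sstar.
    by rewrite le_max; apply/orP; left; exact: le_bigmax.
  by rewrite /lo tj apos /= ler_pdivrMr.
- by have := Hs j tj; rewrite a0 !mulr0.
Qed.

Hypothesis zpos : forall i, 0 < z i.

Lemma aj_pos j : 0 < t j -> 0 < aj j.
Proof. by move=> tj; rewrite /aj addr_gt0 ?mulr_gt0. Qed.

Lemma Lo_pos : 0 < Lo.
Proof.
have [j tj] := ht_pos; apply: (lt_le_trans _ (le_bigmax _ _ j)).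
by rewrite /lo tj aj_pos //= divr_gt0 ?aj_pos // /bj mulr_gt0.
Qed.

Lemma Lo_lt1 : Lo < 1.
Proof.
apply/bigmax_ltP; split => // j _; rewrite /lo.
case: ifPn => [/andP[tj aj0]|_] //.
by rewrite ltr_pdivrMr // mul1r /aj /bj ltrDr.
Qed.

Lemma cond_focal_pos : cond_focal t z = `[Lo, 1[%classic.
Proof.
apply/seteqP; split => s.
  move/cond_focal_feas => [/andP[s0 s1] H] /=; rewrite in_itv /= s1 andbT.
  apply/bigmax_leP; split; first exact: ltW.
  move=> j _; rewrite /lo; case: ifPn => [/andP[tj aj0]|_]; last exact: ltW.
  by rewrite ler_pdivrMr // H.
rewrite /= in_itv /= => /andP[Ls s1]; apply/cond_focal_feas; split.
  by rewrite s1 (lt_le_trans Lo_pos Ls).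
move=> j tj; have := le_trans (le_bigmax 0 lo j) Ls.
by rewrite /lo tj aj_pos //= ler_pdivrMr // aj_pos.
Qed.
End zz.
End det.

Unset Implicit Arguments.


Section meas.
Variable R : realType.

Lemma measurable_inv : measurable_fun [set: R] (@GRing.inv R).
Proof.
have o0 : open (~` [set (0:R)]).
  rewrite openC. apply: accessible_closed_set1. apply: hausdorff_accessible. exact: Rhausdorff.
have -> : [set: R] = ~` [set 0] `|` [set 0] by rewrite setvU.
apply/measurable_funU => //; first exact: measurableC.
split.
  apply: measurable_realfun.open_continuous_measurable_fun.
    exact: o0.
  move=> x; rewrite inE /= => /eqP x0; exact: inv_continuous.
move=> _ B mB; have [B0|B0] := pselect (B (0:R)^-1).
  rewrite (_ : _ `&` _ = [set 0]) //; apply/seteqP; split => [x [->]//|x ->]; by split.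
rewrite (_ : _ `&` _ = set0) //; apply/seteqP; split => [x [/= -> ]//|x //].
Qed.

Variables (d : measure_display) (T : measurableType d).

Lemma mbig_max (I : eqType) (s : seq I) (P : pred I) (x0 : T -> R) (F : I -> T -> R) :
  measurable_fun setT x0 -> (forall i, measurable_fun setT (F i)) ->
  measurable_fun setT (fun w => \big[Order.max/x0 w]_(i <- s | P i) F i w).
Proof.
move=> m0 mF; elim: s => [|i s IH].
  by under eq_fun do rewrite big_nil.
under eq_fun do rewrite big_cons.
case: (P i) => //; exact: measurable_realfun.measurable_maxr.
Qed.

Lemma mbig_min (I : eqType) (s : seq I) (P : pred I) (x0 : T -> R) (F : I -> T -> R) :
  measurable_fun setT x0 -> (forall i, measurable_fun setT (F i)) ->
  measurable_fun setT (fun w => \big[Order.min/x0 w]_(i <- s | P i) F i w).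
Proof.
move=> m0 mF; elim: s => [|i s IH].
  by under eq_fun do rewrite big_nil.
under eq_fun do rewrite big_cons.
case: (P i) => //; exact: measurable_realfun.measurable_minr.
Qed.

Lemma measurable_div (f g : T -> R) : measurable_fun setT f -> measurable_fun setT g ->
  measurable_fun setT (fun w => f w / g w).
Proof.
move=> mf mg; apply: measurable_realfun.measurable_funM => //.
exact: (measurableT_comp measurable_inv mg).
Qed.

Lemma measurable_le (f g : T -> R) : measurable_fun setT f -> measurable_fun setT g ->
  measurable [set w | f w <= g w].
Proof.
move=> mf mg; have := measurable_realfun.measurable_fun_ler mf mg.
move=> /(_ measurableT [set true]) /=; rewrite setTI; apply => //.
Qed.

Lemma measurable_lt (f g : T -> R) : measurable_fun setT f -> measurable_fun setT g ->
  measurable [set w | f w < g w].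
Proof.
move=> mf mg; have := measurable_realfun.measurable_fun_ltr mf mg.
move=> /(_ measurableT [set true]) /=; rewrite setTI; apply => //.
Qed.
End meas.


Definition Ex (R : realType) : probability (measurableTypeR R) R.
Proof. refine (exponential_prob (1:R) : probability _ R). exact: ltr01. Defined.

Section expo.
Variable R : realType.
Local Notation mu := (@lebesgue_measure R).

Lemma ExE A : Ex R A = (\int[mu]_(x in A) (exponential_pdf 1 x)%:E)%E.
Proof. by []. Qed.

Let cexpN : continuous (fun z : R^o => expR (- 1 * z)).
Proof.
move=> z; apply: continuous_comp; last exact: continuous_expR.
by apply: continuousM => //; apply: (@continuousN _ R^o); exact: cst_continuous.
Qed.

Lemma Ex_cy (a : R) : 0 <= a -> Ex R `[a, +oo[%classic = (expR (- a))%:E.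
Proof.
move=> a0; rewrite ExE.
rewrite (@ge0_continuous_FTC2y _ _ (fun x => - (expR (- 1 * x))) _ 0).
- by rewrite sub0e EFinN oppeK mulN1r.
- by move=> x _; apply: exponential_pdf_ge0.
- apply: (@continuous_subspaceW R^o _ _ [set` `[0, +oo[%R]).
    by apply: subset_itvr; rewrite bnd_simp.
  exact: within_continuous_exponential_pdf.
- rewrite -oppr0; apply: cvgN.
  rewrite (_ : (fun x => expR (- 1 * x)) = (fun z => expR (- z))); last first.
    by apply: eq_fun => x; rewrite mulN1r.
  exact: cvgr_expR.
- by move=> x _; exact: ex_derive.
- by apply: cvgN; apply/cvg_at_right_filter; exact: cexpN.
- move=> x; rewrite in_itv /= andbT => ax.
  by apply: derive1_exponential_pdf; rewrite in_itv /= andbT (le_lt_trans a0).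
Qed.

Lemma Ex_oy (a : R) : Ex R `]a, +oo[%classic = (if 0 <= a then expR (- a) else 1)%:E.
Proof.
have [a0|a0] := leP 0 a.
  rewrite -Ex_cy // !ExE integral_itv_obnd_cbnd //.
  apply/measurable_realfun.measurable_EFinP; apply: measurable_funTS.
  exact: measurable_exponential_pdf.
apply/eqP; rewrite eq_le probability_le1 //=.
have <- : Ex R `[0, +oo[%classic = 1%E by rewrite Ex_cy // oppr0 expR0.
apply: le_measure; rewrite ?inE //.
by apply: subset_itvr; rewrite bnd_simp.
Qed.

Lemma Ex_Nyc : Ex R `]-oo, 0]%classic = 0%E.
Proof.
have := probability_setC (Ex R) (measurable_itv `]0, +oo[).
rewrite setCitvr Ex_oy lexx oppr0 expR0 => ->; exact: subee.
Qed.

Lemma Ex_dom : Ex R `<< mu.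
Proof.
apply/null_content_dominatesP => A mA muA0; rewrite ExE.
apply: null_set_integral => //.
apply/measurable_realfun.measurable_EFinP; apply: measurable_funTS.
exact: measurable_exponential_pdf.
Qed.

Lemma integral_Ex f U : measurable U -> measurable_fun U f ->
  (\int[Ex R]_(x in U) `|f x| < +oo)%E ->
  (\int[Ex R]_(x in U) f x = \int[mu]_(x in U) (f x * (exponential_pdf 1 x)%:E))%E.
Proof.
move=> mU mf finf.
rewrite -(Radon_Nikodym_change_of_variables Ex_dom)//=; last first.
  by apply/integrableP; split.
apply: ae_eq_integral => //.
- apply: emeasurable_funM => //; apply: (measurable_int mu).
  apply: (integrableS _ _ (@subsetT _ _)) => //=.
  by apply: Radon_Nikodym_integrable; exact: Ex_dom.
- apply: emeasurable_funM => //=; apply/measurableT_comp => //=.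
  by apply/measurable_funTS; exact: measurable_exponential_pdf.
- apply: ae_eqe_mul2l => /=.
  rewrite Radon_NikodymE//=; first exact: Ex_dom.
  move=> abmu.
  case: cid => /= h [h1 h2 h3].
  apply: integral_ae_eq => //=.
  + exact: integrableS h2.
  + by apply/measurable_funTS/measurableT_comp =>//; exact: measurable_exponential_pdf.
  + by move=> E E01 mE; rewrite -h3.
Qed.
End expo.


Section gen.
Variable R : realType.
Local Notation MR := (measurableTypeR R).

Definition G2 : set (set (MR * MR)) :=
  [set C | exists A y, measurable A /\ C = A `*` `]y, +oo[%classic].

Local Notation S2 := (g_sigma_algebraType G2).

Lemma arch_ge (y : R) : exists n : nat, y < n%:R.
Proof.
exists (Num.Def.archi_bound `|y|); apply: (le_lt_trans (ler_norm y)).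
exact: archi_boundP.
Qed.

Lemma G2_AT (A : set MR) : measurable A -> @measurable _ S2 (A `*` [set: MR]).
Proof.
move=> mA.
have -> : A `*` [set: MR] = \bigcup_n (A `*` `]- (n%:R), +oo[%classic).
  apply/seteqP; split => [[x y] [/= Ax _]|[x y] [n _ [/= Ax _]]] //.
  have [n yn] := arch_ge (- y).
  exists n => //; split => //=; rewrite in_itv /= andbT ltrNl //.
apply: bigcupT_measurable => n; apply: sub_sigma_algebra.
by exists A, (- n%:R).
Qed.

Lemma G2_gen : @measurable _ (MR * MR)%type = <<s G2 >>.
Proof.
apply/seteqP; split; last first.
  apply: smallest_sub; first exact: sigma_algebra_measurable.
  by move=> _ [A [y [mA ->]]]; apply: measurableX.
rewrite measurable_prod_measurableType.
apply: smallest_sub; first exact: smallest_sigma_algebra.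
move=> _ [A mA] [B mB] <-.
pose S := [set B : set MR | @measurable _ S2 (A `*` B)].
suff : <<s @RGenOInfty.G R >> `<=` S.
  apply; move: mB; by rewrite RGenOInfty.measurableE.
apply: smallest_sub.
  split.
  - by rewrite /S /= setX0; exact: (@measurable0 _ S2).
  - move=> X SX; rewrite /S /= setTD.
    have -> : A `*` ~` X = ~` ((~` A) `*` [set: MR] `|` A `*` X).
      apply/seteqP; split => [[x y] [/= Ax nX]|[x y] /=].
        by move=> [[/= nA _]|[/= _ Xy]].
      move=> H; have Ax : A x by apply: contrapT => nA; apply: H; left.
      by split => // Xy; apply: H; right.
    apply: (@measurableC _ S2); apply: (@measurableU _ S2) => //.
    apply: G2_AT; exact: measurableC.
  - move=> F SF; rewrite /S /= setX_bigcupr.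
    exact: (@bigcupT_measurable _ S2).
move=> _ [y ->]; apply: sub_sigma_algebra.
by exists A, y.
Qed.
End gen.


Section prodD.
Variable R : realType.
Local Notation MR := (measurableTypeR R).
Local Notation mu := (@lebesgue_measure R).

Definition gfun (c : R) (x : R) : \bar R :=
  (if 0 <= c * x then expR (- (c * x)) else 1)%:E.

Lemma mgfun c : measurable_fun [set: MR] (gfun c).
Proof.
apply/measurable_EFinP; apply: measurable_fun_ifT => //.
- apply: measurable_fun_ler => //; exact: mulrl_measurable.
- apply: measurableT_comp; first exact: measurable_expR.
  apply: measurableT_comp; first exact: oppr_measurable.
  exact: mulrl_measurable.
Qed.

Lemma gfun_ge0 c x : (0 <= gfun c x)%E.
Proof. by rewrite /gfun lee_fin; case: ifP => // _; exact: expR_ge0. Qed.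

Lemma gfun_le1 c x : (gfun c x <= 1)%E.
Proof.
rewrite /gfun lee_fin; case: ifPn => // cx.
by rewrite expR_le1 oppr_le0.
Qed.

Lemma prod_D (c : R) : 0 <= c ->
  ((Ex R) \x (Ex R))%E [set p : MR * MR | c * p.1 < p.2] = ((1 + c)^-1)%:E.
Proof.
move=> c0.
have c1 : 0 < 1 + c by rewrite ltr_wpDr.
have -> : ((Ex R) \x (Ex R))%E [set p : MR * MR | c * p.1 < p.2] =
  (\int[Ex R]_x Ex R (xsection [set p : MR * MR | (c * p.1 < p.2)%R] x))%E by [].
have E x : Ex R (xsection [set p : MR * MR | (c * p.1 < p.2)%R] x) = gfun c x.
  have -> : xsection [set p : MR * MR | (c * p.1 < p.2)%R] x = `]c * x, +oo[%classic.
    by apply/seteqP; split => y; rewrite /xsection /= inE /= in_itv /= andbT.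
  by rewrite Ex_oy.
under eq_integral do rewrite E.
rewrite integral_Ex //; last 2 first.
- exact: mgfun.
- have H1 : (\int[Ex R]_(x in [set: MR]) `|gfun c x| <=
       \int[Ex R]_(x in [set: MR]) (cst 1%E x))%E.
    apply: ge0_le_integral => //.
    + by apply: measurableT_comp => //; exact: mgfun.
    + by move=> x _; rewrite gee0_abs ?gfun_ge0 ?gfun_le1.
  apply: (le_lt_trans H1).
  rewrite integral_cst // mul1e; apply: (le_lt_trans (probability_le1 (Ex R) measurableT)); exact: ltry.

transitivity (\int[mu]_x ((1 + c)^-1%:E * (exponential_pdf (1 + c) x)%:E))%E.
  apply: eq_integral => x _.
  have [x0|x0] := leP 0 x.
    rewrite /gfun mulr_ge0 // !exponential_pdfE // -!EFinM; congr (_%:E).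
    by rewrite mul1r mulKf ?gt_eqF // -expRD; congr expR; ring.
  by rewrite !lt0_exponential_pdf // mule0 mule0.
rewrite integralZl //; last exact: integrable_exponential_pdf.
by rewrite integral_exponential_pdf // mule1.
Qed.
End prodD.


Section unif.
Variable R : realType.
Local Notation MR := (measurableTypeR R).
Local Notation mu := (@lebesgue_measure R).

Lemma unif_lt (x : R) : uniform_prob (@ltr01 R) (`]-oo, x[%classic : set MR) =
  (if x <= 0 then 0 else if x <= 1 then x else 1)%:E.
Proof.
rewrite /uniform_prob integral_uniform_pdf.
have E : forall A : set MR, measurable A -> A `<=` `[0, 1]%classic ->
    (\int[mu]_(y in A) (uniform_pdf 0 1 y)%:E = mu A)%E.
  move=> A mA sA; rewrite -[RHS]mul1e -integral_cst //.
  apply: eq_integral => y /[!inE] Ay; rewrite /uniform_pdf.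
  have := sA _ Ay; rewrite /= in_itv /= => ->; by rewrite subr0 invr1.
have [x0|x0] := leP x 0.
  rewrite (_ : _ `&` _ = set0) ?integral_set0 //.
  apply/seteqP; split => y // []; rewrite /= !in_itv /= => yx /andP[y0 _].
  by have := lt_le_trans (le_lt_trans y0 yx) x0; rewrite ltxx.
have [x1|x1] := leP x 1.
  rewrite (_ : _ `&` _ = `[0, x[%classic); last first.
    apply/seteqP; split => y; rewrite /= !in_itv /=.
      by case=> yx /andP[-> _].
    case/andP => -> yx; by split => //; rewrite (ltW (lt_le_trans yx x1)).
  rewrite E //; first by rewrite lebesgue_measure_itv /= lte_fin x0 sube0.
  apply: subset_itvl; by rewrite bnd_simp.
rewrite (_ : _ `&` _ = `[0, 1]%classic); last first.
  apply/seteqP; split => y; rewrite /= !in_itv /=; first by case.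
  by move=> /andP[y0 y1]; split; [exact: le_lt_trans y1 x1|rewrite y0 y1].
by rewrite E // lebesgue_measure_itv /= lte_fin ltr01 sube0.
Qed.
End unif.


Lemma key_ineq (R : realType) (x z0 zj tj : R) : 0 < x -> 0 < tj -> 0 < z0 -> 0 < zj ->
  (z0 * tj / (zj + z0 * tj) < x) = ((1 - x) / x * z0 < zj / tj).
Proof.
move=> x0 t0 z00 zj0.
have a0 : 0 < zj + z0 * tj by rewrite addr_gt0 ?mulr_gt0.
have e1 : x - z0 * tj / (zj + z0 * tj) = (x * zj - (1 - x) * z0 * tj) / (zj + z0 * tj).
  by field; rewrite gt_eqF.
have e2 : zj / tj - (1 - x) / x * z0 = (x * zj - (1 - x) * z0 * tj) / (x * tj).
  by field; rewrite !gt_eqF.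
rewrite -subr_gt0 e1 -[RHS]subr_gt0 e2.
by rewrite !pmulr_lgt0 ?invr_gt0 ?mulr_gt0.
Qed.

Section main.
Variables (k : nat) (R : realType) (d : measure_display) (T : measurableType d)
  (P : probability T R) (Z : 'I_k.+2 -> {RV P >-> R}).
Hypothesis Zind : mutually_independent Z.
Hypothesis Zexp : forall i A, measurable A -> distribution P (Z i) A = exponential_prob 1 A.
Variable t : 'I_k.+1 -> R.
Hypothesis ht : simplex t.
Local Notation MR := (measurableTypeR R).

Definition zz (w : T) := fun i => Z i w.

Lemma mZ i : measurable_fun setT (Z i).
Proof. exact: measurable_funP. Qed.

Lemma PZ i (A : set R) : measurable A -> P (Z i @^-1` A) = Ex R A.
Proof. by move=> mA; rewrite -[LHS]/(distribution P (Z i) A) Zexp. Qed.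

Definition Epos := \bigcap_(i in [set: 'I_k.+2]) (Z i @^-1` `]0, +oo[%classic).

Lemma mEpos : measurable Epos.
Proof.
apply: fin_bigcap_measurable; first exact: finite_finset.
move=> i _; apply: measurable_funPTI; exact: measurable_itv.
Qed.

Lemma EposP w : Epos w -> forall i, 0 < Z i w.
Proof. by move=> H i; have := H i I; rewrite /= in_itv /= andbT. Qed.

Lemma PEpos : P Epos = 1%E.
Proof.
rewrite /Epos (Zind (fun=> `]0, +oo[%classic)); last by move=> _; exact: measurable_itv.
rewrite big1 // => i _; rewrite PZ ?Ex_oy ?lexx ?oppr0 ?expR0 //; exact: measurable_itv.
Qed.

Lemma P_Epos (A : set T) : measurable A -> P A = P (A `&` Epos).
Proof.
move=> mA; rewrite -{1}(setIT A) -(setUv Epos) setIUr measureU0 //.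
- exact: measurableI mA mEpos.
- exact: measurableI mA (measurableC mEpos).
- apply: (subset_measure0 (B := ~` Epos)); first exact: measurableI mA (measurableC mEpos).
  + exact: measurableC mEpos.
  + by move=> w [].
  + by move: (probability_setC P mEpos); rewrite PEpos subee.
Qed.

Lemma P_Epos_eq (A B : set T) : measurable A -> measurable B ->
  A `&` Epos = B `&` Epos -> P A = P B.
Proof. by move=> mA mB E; rewrite P_Epos // E -P_Epos. Qed.

Lemma maj j : measurable_fun setT (fun w => aj t (zz w) j).
Proof.
rewrite /aj /zz; apply: measurable_funD; first exact: mZ.
by apply: measurable_funM => //; exact: mZ.
Qed.

Lemma mbj j : measurable_fun setT (fun w => bj t (zz w) j).
Proof. by rewrite /bj /zz; apply: measurable_funM => //; exact: mZ. Qed.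

Lemma mlo j : measurable_fun setT (fun w => lo t (zz w) j).
Proof.
rewrite /lo; case: (0 < t j) => /=; last exact: measurable_cst.
apply: measurable_fun_ifT => //.
- exact: measurable_fun_ltr (maj j).
- exact: measurable_div (mbj j) (maj j).
Qed.

Lemma mup j : measurable_fun setT (fun w => up t (zz w) j).
Proof.
rewrite /up; case: (0 < t j) => /=; last exact: measurable_cst.
apply: measurable_fun_ifT => //.
- exact: measurable_fun_ltr (maj j) _.
- exact: measurable_div (mbj j) (maj j).
Qed.

Definition Uf w := Lo t (zz w).

Lemma mUf : measurable_fun setT Uf.
Proof.
rewrite /Uf /Lo.
exact: (@mbig_max _ _ _ _ _ _ (fun=> 0) (fun j w => lo t (zz w) j) (measurable_cst _) mlo).
Qed.

Lemma msstar : measurable_fun setT (fun w => sstar t (zz w)).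
Proof.
rewrite /sstar; apply: measurable_maxr; first exact: mUf.
apply: measurable_funM => //.
exact: (@mbig_min _ _ _ _ _ _ (fun=> 1) (fun j w => up t (zz w) j) (measurable_cst _) mup).
Qed.

Lemma measurable_imp (b : bool) (A : set T) : measurable A -> measurable [set w | b -> A w].
Proof.
case: b => mA.
  by rewrite (_ : [set w | true -> A w] = A) //; apply/seteqP; split => w /=; auto.
by rewrite (_ : [set w | false -> A w] = setT) //; apply/seteqP; split => w //=.
Qed.

Definition Nset := [set w | cond_focal t (fun i => Z i w) !=set0].

Lemma Nset_eq : Nset = [set w | feas t (zz w) (sstar t (zz w))].
Proof.
apply/seteqP; split => w /=.
  by case=> s /(cond_focal_feas ht) H; apply: sstar_feas; exists s.
by move=> H; exists (sstar t (zz w)); apply/(cond_focal_feas ht).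
Qed.

Lemma mNset : measurable Nset.
Proof.
rewrite Nset_eq.
pose ss := fun w => sstar t (zz w).
have -> : [set w | feas t (zz w) (sstar t (zz w))] =
   [set w | 0 < ss w] `&` [set w | ss w < 1] `&`
   \bigcap_(j in [set: 'I_k.+1]) [set w | 0 < t j -> bj t (zz w) j <= ss w * aj t (zz w) j].
  apply/seteqP; split => w /=.
    by case=> /andP[H1 H2] H3; split => // j _; apply: H3.
  by case=> -[H1 H2] H3; split; [rewrite H1 H2|move=> j; apply: H3].
apply: measurableI; first apply: measurableI.
- exact: measurable_lt (measurable_cst _) msstar.
- exact: measurable_lt msstar (measurable_cst _).
- apply: fin_bigcap_measurable; first exact: finite_finset.
  move=> j _; apply: measurable_imp.
  apply: measurable_le; first exact: mbj.
  by apply: measurable_funM; [exact: msstar|exact: maj].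
Qed.

Lemma Epos_N w : Epos w -> Nset w.
Proof.
move=> /EposP zp; exists (Lo t (zz w)).
rewrite (cond_focal_pos ht) //= in_itv /= lexx Lo_lt1 //.
Qed.

Lemma Epos_cond w : Epos w -> cond_focal t (zz w) = `[Uf w, 1[%classic.
Proof. by move=> /EposP zp; rewrite (cond_focal_pos ht). Qed.


Variable j0 : 'I_k.+1.
Hypothesis tj0 : 0 < t j0.

Definition Y w := \big[Order.min/(Z (lift ord0 j0) w / t j0)]_(j | 0 < t j)
  (Z (lift ord0 j) w / t j).

Lemma Y_gt y w : (y < Y w) <-> forall j, 0 < t j -> y < Z (lift ord0 j) w / t j.
Proof.
split; first by move/bigmin_gtP => [_ H].
by move=> H; apply/bigmin_gtP; split => //; apply: H.
Qed.

Lemma mY : measurable_fun setT Y.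
Proof.
apply: (@mbig_min _ _ _ _ _ _ (fun w => Z (lift ord0 j0) w / t j0)
   (fun j w => Z (lift ord0 j) w / t j)).
  by apply: measurable_funM => //; exact: mZ.
by move=> j; apply: measurable_funM => //; exact: mZ.
Qed.

Definition V (w : T) : (MR * MR)%type := (Z ord0 w, Y w).

Lemma mV : measurable_fun setT V.
Proof. exact: measurable_fun_pair (mZ ord0) mY. Qed.

Definition Vm : {mfun T >-> (MR * MR)%type} := mfun_Sub (mem_set mV).

Definition law := distribution P Vm.

Definition Bf (A : set R) (y : R) (i : 'I_k.+2) : set R :=
  match unlift ord0 i with
  | Some j => if 0 < t j then `]y * t j, +oo[%classic else setT
  | None => A end.

Lemma law_rect (A : set MR) y : measurable A ->
  law (A `*` `]y, +oo[%classic) = (Ex R A * Ex R `]y, +oo[%classic)%E.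
Proof.
move=> mA.
have -> : law (A `*` `]y, +oo[%classic) =
    P (\bigcap_(i in [set: 'I_k.+2]) (Z i @^-1` Bf A y i)).
  rewrite /law /distribution /pushforward; congr (P _).
  apply/seteqP; split => w /=.
    rewrite in_itv /= andbT => -[Aw /Y_gt Hy] i _ /=.
    rewrite /Bf; case: unliftP => [j ->|->] //.
    case: ifPn => // tj; rewrite /= in_itv /= andbT.
    by rewrite -ltr_pdivlMr //; apply: Hy.
  move=> H; split.
    by have := H ord0 I; rewrite /= /Bf unlift_none.
  rewrite /= in_itv /= andbT; apply/Y_gt => j tj.
  have := H (lift ord0 j) I; rewrite /= /Bf liftK tj /= in_itv /= andbT.
  by rewrite ltr_pdivlMr.
rewrite Zind; last first.
  move=> i; rewrite /Bf; case: unliftP => [j _|_] //.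
  by case: ifPn => _ //; exact: measurable_itv.
rewrite big_ord_recl /= {1}/Bf unlift_none PZ //.
congr (_ * _)%E.
have fac j : P (Z (lift ord0 j) @^-1` Bf A y (lift ord0 j)) =
    (if 0 <= y then expR (- (y * t j)) else 1)%:E.
  rewrite /Bf liftK; case: ifPn => tj.
    by rewrite PZ ?Ex_oy ?pmulr_lge0 //; exact: measurable_itv.
  have t0 : t j = 0.
    by apply/eqP; rewrite eq_le ht_ge0 // andbT leNgt.
  by rewrite preimage_setT probability_setT t0 mulr0 oppr0 expR0; case: ifP.
under eq_bigr do rewrite fac.
rewrite Ex_oy; case: ifPn => y0.
  rewrite prodEFin -expR_sum; congr (expR _)%:E.
  by rewrite sumrN -mulr_sumr (proj2 ht) mulr1.
by rewrite big1.
Qed.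

Lemma law_eq (X : set (MR * MR)) : measurable X -> law X = ((Ex R) \x (Ex R))%E X.
Proof.
apply: (measure_unique (G2 R) (fun n : nat => [set: MR] `*` `]- (n%:R), +oo[%classic)).
- exact: G2_gen.
- move=> _ _ [A [y [mA ->]]] [A' [y' [mA' ->]]].
  exists (A `&` A'), (Num.max y y'); split; first exact: measurableI.
  rewrite -setXI; congr (_ `*` _).
  apply/seteqP; split => x /=; rewrite !in_itv /= !andbT gt_max.
    by case=> -> ->.
  by case/andP => -> ->.
- by move=> n; exists setT, (- n%:R).
- apply/seteqP; split => // -[x y] _.
  have [n yn] := arch_ge _ (- y).
  by exists n => //; split => //=; rewrite in_itv /= andbT ltrNl.
- move=> _ [A [y [mA ->]]].
  exact: (etrans (law_rect A y mA) (esym (product_measure1E (Ex R) (Ex R) mA (measurable_itv `]y, +oo[)))).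
- move=> n.
  have mg : measurable ([set: MR] `*` (`]- (n%:R), +oo[%classic : set MR)).
    by apply: measurableX => //; exact: measurable_itv.
  exact: (le_lt_trans (probability_le1 law mg) (ltry _)).
Qed.


Lemma mpre (f : T -> R) (A : set R) : measurable_fun setT f -> measurable A ->
  measurable (f @^-1` A).
Proof. by move=> mf mA; rewrite -[X in measurable X]setTI; exact: mf. Qed.

Lemma Uf_lt (x : R) w : 0 < x -> Epos w ->
  (Uf w < x) <-> ((1 - x) / x * Z ord0 w < Y w).
Proof.
move=> x0 /EposP zp; rewrite /Uf /Lo; split.
  move/bigmax_ltP => [_ H]; apply/Y_gt => j tj.
  have := H j isT; rewrite /lo tj aj_pos //= /aj /bj /zz.
  by rewrite key_ineq.
move=> /Y_gt H; apply/bigmax_ltP; split => // j _.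
rewrite /lo; case: ifPn => [/andP[tj _]|//].
by rewrite /aj /bj /zz key_ineq //; apply: H.
Qed.

Definition Dc (c : R) : set (MR * MR) := [set p | (c * p.1 < p.2)%R].

Lemma mDc c : measurable (Dc c).
Proof.
apply: measurable_lt; last exact: measurable_snd.
apply: measurable_funM => //; exact: measurable_fst.
Qed.

Lemma PUf_lt x : 0 < x <= 1 -> P (Uf @^-1` `]-oo, x[%classic) = x%:E.
Proof.
case/andP => x0 x1.
pose c := (1 - x) / x.
have c0 : 0 <= c by rewrite divr_ge0 ?subr_ge0 // ltW.
transitivity (P (Vm @^-1` Dc c)).
  apply: P_Epos_eq.
  - by apply: mpre; [exact: mUf|exact: measurable_itv].
  - by apply: measurable_funPTI; exact: mDc.
  apply/seteqP; split => w [H1 H2]; split => //.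
    by move: H1; rewrite /= in_itv /= => /(Uf_lt x w x0 H2).
  by rewrite /= in_itv /=; apply/(Uf_lt x w x0 H2).
rewrite -[LHS]/(law (Dc c)) law_eq; last exact: mDc.
have -> : ((Ex R) \x (Ex R))%E (Dc c) = ((1 + c)^-1)%:E by exact: prod_D.
congr (_%:E); rewrite /c.
by field; rewrite gt_eqF // addrC subrK oner_neq0.
Qed.

Lemma PUf_lt0 x : x <= 0 -> P (Uf @^-1` `]-oo, x[%classic) = 0%E.
Proof.
move=> x0; rewrite P_Epos; last by apply: mpre; [exact: mUf|exact: measurable_itv].
rewrite (_ : _ `&` _ = set0) ?measure0 //; apply/seteqP; split => w //=.
rewrite in_itv /= => -[Ux Ew]; have zp := EposP w Ew.
have := Lo_pos ht zp; rewrite -/(zz w) -/(Uf w).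
move=> U0; have := lt_le_trans (lt_trans U0 Ux) x0; by rewrite ltxx.
Qed.

Lemma PUf_lt1 x : 1 < x -> P (Uf @^-1` `]-oo, x[%classic) = 1%E.
Proof.
move=> x1; rewrite P_Epos; last by apply: mpre; [exact: mUf|exact: measurable_itv].
rewrite (_ : _ `&` _ = Epos) ?PEpos //; apply/seteqP; split => w; first by case.
move=> Ew; split => //=; rewrite in_itv /=.
have zp := EposP w Ew.
exact: lt_trans (Lo_lt1 t zp) x1.
Qed.

Lemma mUfR : measurable_fun [set: T] (Uf : T -> MR).
Proof. exact: mUf. Qed.

Definition Ufm : {mfun T >-> MR} := @mfun_Sub _ _ T MR (Uf : T -> MR) (mem_set mUfR).

Lemma PUf_unif (B : set MR) : measurable B ->
  P (Uf @^-1` B) = uniform_prob (@ltr01 R) B.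
Proof.
move=> mB.
have -> : P (Uf @^-1` B) = distribution P Ufm B by [].
apply: (@measure_unique _ R MR (@RGenInftyO.G R) (fun n : nat => `]-oo, n%:R[%classic)) => //.
- exact: RGenInftyO.measurableE.
- move=> _ _ [a ->] [b ->]; exists (Num.min a b).
  apply/seteqP; split => x /=; rewrite !in_itv /= lt_min.
    by case=> -> ->.
  by case/andP => -> ->.
- by move=> n; exists n%:R.
- apply/seteqP; split => // x _.
  have [n xn] := arch_ge _ x.
  by exists n => //=; rewrite in_itv.
- move=> _ [x ->].
  transitivity (P (Uf @^-1` `]-oo, x[%classic)); first by [].
  transitivity ((if x <= 0 then 0 else if x <= 1 then x else 1)%:E); last first.
    exact: (esym (unif_lt R x)).
  have [x0|x0] := leP x 0; first exact: PUf_lt0.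
  have [x1|x1] := leP x 1; first by apply: PUf_lt; rewrite x0 x1.
  exact: PUf_lt1.
- move=> n.
  have mg : measurable (`]-oo, n%:R[%classic : set MR) by exact: measurable_itv.
  exact: (le_lt_trans (probability_le1 (distribution P Ufm) mg) (ltry _)).
Qed.

Definition Um : {RV P >-> R} := mfun_Sub (mem_set mUf).

Lemma PN1 : P Nset = 1%E.
Proof.
apply/eqP; rewrite eq_le probability_le1 ?mNset //=.
rewrite -PEpos; apply: le_measure; rewrite ?inE; [exact: mEpos|exact: mNset|].
exact: Epos_N.
exact: mNset.
Qed.

Lemma main_result :
  let N := [set w | cond_focal t (fun i => Z i w) !=set0] in
  exists U : {RV P >-> R},
    [/\ measurable N,
        (0 < P N)%E,
        {ae P, forall w, N w -> cond_focal t (fun i => Z i w) = `[U w, 1[%classic}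
      & forall B, measurable B ->
          P (N `&` U @^-1` B) = (P N * uniform_prob (@ltr01 R) B)%E].
Proof.
move=> N; have NE : N = Nset by [].
exists Um; split.
- rewrite NE; exact: mNset.
- by rewrite NE PN1.
- exists (~` Epos); split; [exact: measurableC mEpos| |].
    by move: (probability_setC P mEpos); rewrite PEpos subee.
  move=> w /= H Ew; apply: H => _.
  exact: Epos_cond.
- move=> B mB; rewrite NE PN1 mul1e.
  have -> : P (Nset `&` Um @^-1` B) = P (Uf @^-1` B).
    apply: P_Epos_eq.
    + apply: measurableI; first exact: mNset.
      by apply: mpre; [exact: mUf|].
    + by apply: mpre; [exact: mUf|].
    apply/seteqP; split => w; first by case=> -[].
    by case=> H1 H2; split => //; split => //; exact: Epos_N.
  exact: PUf_unif.
Qed.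

End main.


Theorem theorem2 (k : nat) (R : realType) (d : measure_display)
  (T : measurableType d) (P : probability T R)
  (Z : 'I_k.+2 -> {RV P >-> R})
  (Zind : mutually_independent Z)
  (Zexp : forall i A, measurable A -> distribution P (Z i) A = exponential_prob 1 A)
  (t : 'I_k.+1 -> R) (ht : simplex t) :
  let N := [set w | cond_focal t (fun i => Z i w) !=set0] in
  exists U : {RV P >-> R},
    [/\ measurable N,
        (0 < P N)%E,
        {ae P, forall w, N w -> cond_focal t (fun i => Z i w) = `[U w, 1[%classic}
      & forall B, measurable B ->
          P (N `&` U @^-1` B) = (P N * uniform_prob (@ltr01 R) B)%E].
Proof.
have [j0 tj0] := ht_pos ht.
exact: (@main_result k R d T P Z Zind Zexp t ht j0 tj0).
Qed.
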